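(* There exist instances of the two-valued atomic model and a $(k,l)$-partition that is a Nash equilibrium under the proportional-to-square-roots scheme, such that the proportional-to-square-roots scheme is not Sybil-proof with respect to this partition.
   Context: Atomic model with threshold $h$: every player has stake $1$ (small) or $a$ (large), with $h,a$ integers, $2\le a\le h-1$. Pools partition the players; a pool $C$ has reward $\rho(C)=1$ if its total stake is at least $h$, else $0$. Proportional-to-square-roots scheme: player $i$ with stake $a_i$ in pool $C$ receives $\frac{\sqrt{a_i}}{\sum_{j\in C}\sqrt{a_j}}\rho(C)$. A partition into winning pools is a Nash equilibrium if no player can strictly increase her payment by moving to another pool or opening a new pool alone. For integers $k,l$ with $k+a\ge h$ and $l\ge h+1$, a $(k,l)$-partition consists only of pools of the types: Type A: exactly one large player and $k$ small players; Type B: $l$ small players; Type C: $l-1$ small players. Sybil strategy: given a partition $\Pi$, a player of stake $a_i$ splits her stake into nonnegative amounts $s_1,\dots,s_t$ summing to $a_i$ and joins $t$ distinct pools of $\Pi$ (her original pool taken without her), contributing $s_j$ to the $j$-th as a separate identity of stake $s_j$; others stay put; her payoff is the sum of the payments to her identities. The scheme is Sybil-proof with respect to $\Pi$ if no player becomes strictly better off by a Sybil strategy. *)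

(* Defs.v *)
From Stdlib Require Import Reals Lra Lia List Arith.
Import ListNotations.
Open Scope R_scope.

(* An instance of the atomic model: players are 0, ..., n-1;
   [stake i] is the (natural-number) stake of player i;
   a partition is given by a labelling [pool : nat -> nat] (player i is in
   the pool labelled [pool i]); the pools of the partition are the nonempty
   label classes. *)

Definition Rsum (l : list R) : R := fold_right Rplus 0 l.

Definition rho (h : nat) (s : R) : R := if Rle_lt_dec (INR h) s then 1 else 0.

Definition players (n : nat) : list nat := seq 0 n.

Definition members (n : nat) (pool : nat -> nat) (c : nat) : list nat :=
  filter (fun j => Nat.eqb (pool j) c) (players n).

Definition others (n : nat) (pool : nat -> nat) (c i : nat) : list nat :=
  filter (fun j => negb (Nat.eqb j i)) (members n pool c).

Definition is_pool (n : nat) (pool : nat -> nat) (c : nat) : Prop :=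
  exists j, (j < n)%nat /\ pool j = c.

Definition tot_stake (stake : nat -> nat) (l : list nat) : R :=
  Rsum (map (fun j => INR (stake j)) l).

Definition sqrt_sum (stake : nat -> nat) (l : list nat) : R :=
  Rsum (map (fun j => sqrt (INR (stake j))) l).

(* payment (proportional-to-square-roots) to an identity of stake s
   in a pool consisting of the players in l together with this identity *)
Definition pay_join (h : nat) (stake : nat -> nat) (l : list nat) (s : R) : R :=
  sqrt s / (sqrt_sum stake l + sqrt s) * rho h (tot_stake stake l + s).

Definition payment (h n : nat) (stake : nat -> nat) (pool : nat -> nat) (i : nat) : R :=
  let C := members n pool (pool i) in
  sqrt (INR (stake i)) / sqrt_sum stake C * rho h (tot_stake stake C).

Definition valid_instance (h a n : nat) (stake : nat -> nat) : Prop :=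
  (2 <= a)%nat /\ (a <= h - 1)%nat /\
  forall i, (i < n)%nat -> stake i = 1%nat \/ stake i = a.

Definition n_small (n : nat) (stake pool : nat -> nat) (c : nat) : nat :=
  length (filter (fun j => Nat.eqb (stake j) 1) (members n pool c)).
Definition n_large (a n : nat) (stake pool : nat -> nat) (c : nat) : nat :=
  length (filter (fun j => Nat.eqb (stake j) a) (members n pool c)).

Definition kl_partition (h a n : nat) (stake pool : nat -> nat) (k l : nat) : Prop :=
  (h <= k + a)%nat /\ (h + 1 <= l)%nat /\
  forall c, is_pool n pool c ->
    (n_large a n stake pool c = 1%nat /\ n_small n stake pool c = k)
    \/ (n_large a n stake pool c = 0%nat /\ n_small n stake pool c = l)
    \/ (n_large a n stake pool c = 0%nat /\ n_small n stake pool c = (l - 1)%nat).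

(* Nash equilibrium: all pools winning, and no player strictly gains by
   moving to another pool or by opening a new pool alone. *)
Definition nash_eq (h n : nat) (stake pool : nat -> nat) : Prop :=
  (forall c, is_pool n pool c -> INR h <= tot_stake stake (members n pool c)) /\
  (forall i, (i < n)%nat ->
     (forall c, is_pool n pool c -> c <> pool i ->
        pay_join h stake (members n pool c) (INR (stake i)) <= payment h n stake pool i) /\
     pay_join h stake [] (INR (stake i)) <= payment h n stake pool i).

(* Its payoff: each identity joins the corresponding pool
   (taken without i). *)
Definition sybil_strategy (n : nat) (stake pool : nat -> nat) (i : nat)
    (st : list (nat * R)) : Prop :=
  NoDup (map fst st) /\
  (forall p, In p st -> is_pool n pool (fst p) /\ 0 <= snd p) /\
  Rsum (map snd st) = INR (stake i).

Definition sybil_payoff (h n : nat) (stake pool : nat -> nat) (i : nat)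
    (st : list (nat * R)) : R :=
  Rsum (map (fun p => pay_join h stake (others n pool (fst p) i) (snd p)) st).

Definition sybil_proof (h n : nat) (stake pool : nat -> nat) : Prop :=
  forall i st, (i < n)%nat -> sybil_strategy n stake pool i st ->
    sybil_payoff h n stake pool i st <= payment h n stake pool i.

(* Main.v *)
Require Import Defs.
From Stdlib Require Import Reals List.
From Stdlib Require Import Lra Lia.
Import ListNotations.
Open Scope R_scope.

Lemma rho_ge h s : INR h <= s -> rho h s = 1.
Proof. intro H; unfold rho; destruct (Rle_lt_dec (INR h) s); lra. Qed.
Lemma rho_lt h s : s < INR h -> rho h s = 0.
Proof. intro H; unfold rho; destruct (Rle_lt_dec (INR h) s); lra. Qed.

Lemma lb_div x c m : 0 < c -> m * c < x -> m < x / c.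
Proof.
  intros Hc H. apply Rmult_lt_reg_r with c; [lra|].
  unfold Rdiv; rewrite Rmult_assoc, Rinv_l; lra.
Qed.

Lemma ub_div x c m : 0 < c -> x <= m * c -> x / c <= m.
Proof.
  intros Hc H. apply Rmult_le_reg_r with c; [lra|].
  unfold Rdiv; rewrite Rmult_assoc, Rinv_l; lra.
Qed.

Definition pl (j : nat) : nat := if Nat.ltb j 4 then 0%nat else 1%nat.

Theorem theorem6p3 :
  exists (h a n : nat) (stake pool : nat -> nat) (k l : nat),
    valid_instance h a n stake /\
    kl_partition h a n stake pool k l /\
    nash_eq h n stake pool /\
    ~ sybil_proof h n stake pool.
Proof.
  exists 3%nat, 2%nat, 8%nat, (fun _ => 1%nat), pl, 1%nat, 4%nat.
  split; [|split; [|split]].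
  - split; [lia|split; [simpl; lia|]]. intros; left; reflexivity.
  - split; [lia|split; [lia|]]. intros c [j [Hj Hc]]. subst c.
    unfold pl; destruct (Nat.ltb j 4); right; left; split; vm_compute; reflexivity.
  - split.
    + intros c [j [Hj Hc]]. subst c.
      unfold pl; destruct (Nat.ltb j 4); unfold tot_stake; simpl; lra.
    + intros i Hi. split.
      * intros c [j [Hj Hc]] Hne. subst c. unfold pay_join, payment.
        unfold pl in *; destruct (Nat.ltb i 4); destruct (Nat.ltb j 4);
          try (exfalso; apply Hne; reflexivity);
          simpl; rewrite ?sqrt_1;
          rewrite !rho_ge by (unfold tot_stake; simpl; lra);
          unfold sqrt_sum; simpl; rewrite ?sqrt_1;
          rewrite !Rmult_1_r; unfold Rdiv; rewrite !Rmult_1_l;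
          apply Rinv_le_contravar; lra.
      * unfold pay_join, payment. rewrite (rho_lt 3) by (unfold tot_stake; simpl; lra).
        rewrite Rmult_0_r.
        unfold pl; destruct (Nat.ltb i 4);
          rewrite rho_ge by (unfold tot_stake; simpl; lra);
          unfold sqrt_sum; simpl; rewrite ?sqrt_1;
          rewrite !Rmult_1_r; unfold Rdiv; rewrite !Rmult_1_l;
          apply Rlt_le, Rinv_0_lt_compat; lra.
  - intro H. specialize (H 0%nat [(0%nat, /2); (1%nat, /2)]).
    assert (Hs : sybil_strategy 8 (fun _ => 1%nat) pl 0 [(0%nat, /2); (1%nat, /2)]).
    { split; [|split].
      - simpl. constructor; [simpl; intros [E|[]]; discriminate|].
        constructor; [simpl; tauto| constructor].
      - intros p [E|[E|[]]]; subst p; simpl; split; try lra.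
        + exists 0%nat; split; [lia|reflexivity].
        + exists 4%nat; split; [lia|reflexivity].
      - simpl; lra. }
    specialize (H ltac:(lia) Hs).
    revert H. unfold sybil_payoff, pay_join, payment. simpl.
    rewrite !rho_ge by (unfold tot_stake; simpl; lra).
    unfold sqrt_sum; simpl; rewrite ?sqrt_1.
    set (x := sqrt (/2)).
    assert (Hx0 : 0 <= x) by apply sqrt_pos.
    assert (Hxx : x * x = /2) by (apply sqrt_sqrt; lra).
    assert (Hx : 0.7 < x) by nra.
    assert (A : 0.18 < x / (1 + (1 + (1 + 0)) + x)) by (apply lb_div; lra).
    assert (B : 0.14 < x / (1 + (1 + (1 + (1 + 0))) + x)) by (apply lb_div; lra).
    intro H.
    assert (C : 1 / (1 + (1 + (1 + (1 + 0)))) * 1 <= 0.26)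
      by (rewrite Rmult_1_r; apply ub_div; lra).
    lra.
Qed.
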